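(* Let $H$ be a real Hilbert space and $\{C_\alpha\}_{\alpha\in\Omega}$ ($|\Omega|\ge2$) a family of closed convex subsets of $H$ whose intersection $C=\bigcap_\alpha C_\alpha$ is nonempty and has affine hull dense in $H$. Then for every starting element $x_0\in H$ and every sequence $\{t_n\}\subset[0,1]$ of weakness parameters, every sequence $\{x_n\}$ of remote projections onto $\{C_\alpha\}$ converges weakly.
   Context: $P_\alpha$ is the metric projection onto $C_\alpha$. A sequence of remote projections with weakness parameters $t_n\in[0,1]$ starting at $x_0$: $x_{n+1}=P_{\alpha(n)}x_n$, where $\alpha(n)\in\Omega$ is any index with $\mathrm{dist}(x_n,C_{\alpha(n)})\ge t_n\sup_\alpha\mathrm{dist}(x_n,C_\alpha)$; if $t_n=1$ for some $n$ it is required that $\max_\alpha\mathrm{dist}(x,C_\alpha)$ is attained for every $x\in H$. *)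

(* Defs.v *)
From HB Require Import structures.
From mathcomp Require Import all_boot all_order all_algebra.
From mathcomp Require Import all_classical all_reals all_analysis.
Set Implicit Arguments. Unset Strict Implicit. Unset Printing Implicit Defensive.
Import Order.TTheory GRing.Theory Num.Theory.
Import numFieldNormedType.Exports.
Local Open Scope classical_set_scope.
Local Open Scope ring_scope.

Definition is_inner_product (R : realType) (H : normedModType R)
  (ip : H -> H -> R) : Prop :=
  [/\ forall x y, ip x y = ip y x,
      forall a x y z, ip (a *: x + y) z = a * ip x z + ip y z &
      forall x, ip x x = `|x| ^+ 2].

Definition convex_subset (R : realType) (H : normedModType R) (A : set H) :=
  forall x y (l : R), A x -> A y -> 0 <= l -> l <= 1 ->
    A (l *: x + (1 - l) *: y).

Definition affine_hull (R : realType) (H : normedModType R) (A : set H) : set H :=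
  [set z | exists (n : nat) (p : 'I_n -> H) (w : 'I_n -> R),
     [/\ forall i, A (p i), \sum_(i < n) w i = 1 &
         z = \sum_(i < n) w i *: p i]].

Definition dist_set (R : realType) (H : normedModType R) (x : H) (A : set H) : R :=
  inf [set `|x - y| | y in A].

Definition is_metric_proj (R : realType) (H : normedModType R)
  (A : set H) (x p : H) : Prop :=
  A p /\ forall y, A y -> `|x - p| <= `|x - y|.

Definition sup_dist (R : realType) (H : normedModType R) (Omega : Type)
  (C : Omega -> set H) (x : H) : R :=
  sup [set dist_set x (C a) | a in [set: Omega]].

Definition remote_projections (R : realType) (H : normedModType R)
  (Omega : Type) (C : Omega -> set H) (t : nat -> R) (x0 : H)
  (x : nat -> H) : Prop :=
  [/\ forall n, 0 <= t n <= 1,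
      (exists n, t n = 1) ->
        (forall y : H, exists a, dist_set y (C a) = sup_dist C y),
      x 0%N = x0 &
      exists alpha : nat -> Omega, forall n,
        t n * sup_dist C (x n) <= dist_set (x n) (C (alpha n)) /\
        is_metric_proj (C (alpha n)) (x n) (x n.+1)].

Definition weakly_converges (R : realType) (H : normedModType R)
  (ip : H -> H -> R) (x : nat -> H) : Prop :=
  exists l : H, forall y : H, (fun n => ip (x n) y) @ \oo --> ip l y.

(* Main.v *)
Require Import Defs.
From HB Require Import structures.
From mathcomp Require Import all_boot all_order all_algebra.
From mathcomp Require Import all_classical all_reals all_analysis.
From mathcomp Require Import ring lra.
Import Order.TTheory GRing.Theory Num.Theory.
Import numFieldNormedType.Exports.
Local Open Scope classical_set_scope.
Local Open Scope ring_scope.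
Set Implicit Arguments. Unset Strict Implicit.

Section IP.
Variables (R : realType) (H : normedModType R) (ip : H -> H -> R).
Hypothesis hip : is_inner_product ip.

Lemma ipC x y : ip x y = ip y x.
Proof. by case: hip. Qed.
Lemma ipL a x y z : ip (a *: x + y) z = a * ip x z + ip y z.
Proof. by case: hip. Qed.
Lemma ipn x : ip x x = `|x| ^+ 2.
Proof. by case: hip. Qed.
Lemma ip0l z : ip 0 z = 0.
Proof.
have := ipL 1 0 0 z; rewrite scaler0 addr0 mul1r => h; lra.
Qed.
Lemma ipDl x y z : ip (x + y) z = ip x z + ip y z.
Proof. by have := ipL 1 x y z; rewrite scale1r mul1r. Qed.
Lemma ipZl a x z : ip (a *: x) z = a * ip x z.
Proof. by have := ipL a x 0 z; rewrite addr0 ip0l addr0. Qed.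
Lemma ipNl x z : ip (- x) z = - ip x z.
Proof. by rewrite -scaleN1r ipZl mulN1r. Qed.
Lemma ipBl x y z : ip (x - y) z = ip x z - ip y z.
Proof. by rewrite ipDl ipNl. Qed.
Lemma ip0r z : ip z 0 = 0.
Proof. by rewrite ipC ip0l. Qed.
Lemma ipDr x y z : ip z (x + y) = ip z x + ip z y.
Proof. by rewrite ipC ipDl !(ipC z). Qed.
Lemma ipZr a x z : ip z (a *: x) = a * ip z x.
Proof. by rewrite ipC ipZl ipC. Qed.
Lemma ipNr x z : ip z (- x) = - ip z x.
Proof. by rewrite ipC ipNl ipC. Qed.
Lemma ipBr x y z : ip z (x - y) = ip z x - ip z y.
Proof. by rewrite ipDr ipNr. Qed.

Lemma normD2 x y : `|x + y| ^+ 2 = `|x| ^+ 2 + 2 * ip x y + `|y| ^+ 2.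
Proof. rewrite -!ipn ipDl !ipDr (ipC y x); ring. Qed.
Lemma normB2 x y : `|x - y| ^+ 2 = `|x| ^+ 2 - 2 * ip x y + `|y| ^+ 2.
Proof. rewrite -!ipn ipBl !ipBr (ipC y x); ring. Qed.

Lemma sq_le_norm (a b : R) : 0 <= b -> a ^+ 2 <= b ^+ 2 -> `|a| <= b.
Proof.
move=> b0 h; rewrite leNgt; apply/negP => hb.
have : b ^+ 2 < `|a| ^+ 2.
  by rewrite ltr_pXn2r // (le_lt_trans b0 hb).
by rewrite real_normK ?num_real // ltNge h.
Qed.

Lemma CS x y : `|ip x y| <= `|x| * `|y|.
Proof.
have [->|y0] := eqVneq y 0; first by rewrite ip0r !normr0 mulr0.
apply: sq_le_norm; first by rewrite mulr_ge0.
have ny : 0 < `|y| ^+ 2 by rewrite exprn_gt0 // normr_gt0.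
set B := ip x y; set D := `|y| ^+ 2.
have h := normr_ge0 (x - (B / D) *: y).
have := exprn_ge0 2 h; rewrite normB2 ipZr normrZ exprMn real_normK ?num_real //.
move=> h2.
have e : B ^+ 2 <= `|x| ^+ 2 * D.
  have : 0 <= (`|x| ^+ 2 - 2 * (B / D * B) + (B / D) ^+ 2 * D) * D
    by rewrite mulr_ge0 // ltW.
  have -> : (`|x| ^+ 2 - 2 * (B / D * B) + (B / D) ^+ 2 * D) * D
       = `|x| ^+ 2 * D - B ^+ 2.
    by field; rewrite gt_eqF.
  by rewrite subr_ge0.
by rewrite exprMn.
Qed.

End IP.


Lemma cauchy_seq (R : realType) (V : completeNormedModType R) (u : nat -> V) :
 (forall e, 0 < e -> exists N, forall n, (N <= n)%N -> `|u N - u n| < e) -> cvgn u.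
Proof.
move=> hc; apply: cauchy_cvg; apply: cauchy_exP => e e0.
have [N hN] := hc e e0. exists (u N). exists N => // n /= Nn.
rewrite -ball_normE /=. exact: hN.
Qed.

Lemma cauchy_seqR (R : realType) (u : nat -> R) :
 (forall e, 0 < e -> exists N, forall n, (N <= n)%N -> `|u N - u n| < e) -> cvgn u.
Proof. move=> h; exact: (@cauchy_seq R R^o u h). Qed.

Section Fej.
Variables (R : realType) (H : normedModType R) (ip : H -> H -> R).
Hypothesis hip : is_inner_product ip.

Lemma proj_fejer (A : set H) (x p c : H) : convex_subset A -> is_metric_proj A x p -> A c ->
  `|p - c| <= `|x - c|.
Proof.
move=> cvx [Ap pmin] Ac.
set B := ip (x - p) (c - p); set D := `|c - p| ^+ 2.
have D0 : 0 <= D by rewrite exprn_ge0.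
have key : forall l, 0 < l -> l <= 1 -> 0 <= - 2 * l * B + l ^+ 2 * D.
  move=> l l0 l1.
  have Az := cvx c p l Ac Ap (ltW l0) l1.
  have := pmin _ Az.
  have -> : x - (l *: c + (1 - l) *: p) = (x - p) - l *: (c - p).
    rewrite scalerBl scale1r scalerBr opprD opprB !addrA.
    by rewrite opprB addrA [RHS]addrAC [LHS]addrAC (addrAC x).
  move=> h.
  have h2 : `|x - p| ^+ 2 <= `|x - p - l *: (c - p)| ^+ 2.
    by rewrite ler_pXn2r // ?nnegrE.
  move: h2; rewrite [X in _ <= X](normB2 hip) (ipZr hip) normrZ exprMn real_normK ?num_real //.
  rewrite -/B -/D. nra.
have B0 : B <= 0.
  rewrite leNgt; apply/negP => Bp.
  have BD : 0 < B + D by lra.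
  set l := B / (B + D).
  have l0 : 0 < l by rewrite divr_gt0.
  have l1 : l <= 1 by rewrite ler_pdivrMr // mul1r; lra.
  have := key l l0 l1.
  have e : l * (B + D) = B by rewrite /l mulfVK // gt_eqF.
  nra.
have e2 : `|x - c| ^+ 2 = `|x - p| ^+ 2 - 2 * B + `|p - c| ^+ 2.
  have -> : x - c = (x - p) + (p - c) by rewrite addrA subrK.
  rewrite (normD2 hip); congr (_ + _); rewrite /B.
  have -> : p - c = - (c - p) by rewrite opprB.
  rewrite (ipNr hip); ring.
have : `|p - c| ^+ 2 <= `|x - c| ^+ 2.
  rewrite e2; have := exprn_ge0 2 (normr_ge0 (x - p)); lra.
move/(sq_le_norm (normr_ge0 _)); by rewrite normr_id.
Qed.
End Fej.


Lemma eps0 (R : realType) (a : R) : (forall e, 0 < e -> `|a| <= e) -> a = 0.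
Proof.
move=> h; case: (eqVneq a 0) => // a0.
have p : 0 < `|a| by rewrite normr_gt0.
have := h (`|a| / 2); rewrite divr_gt0 // => /(_ isT); lra.
Qed.

Lemma le_eps (R : realType) (a b : R) : (forall e, 0 < e -> a <= b + e) -> a <= b.
Proof.
move=> h; rewrite leNgt; apply/negP => ab.
have := h ((a - b) / 2); rewrite divr_gt0 ?subr_gt0 // => /(_ isT); lra.
Qed.

Lemma inv_small (R : realType) (e : R) : 0 < e ->
  exists N, forall k, (N <= k)%N -> k.+1%:R^-1 < e.
Proof.
move=> e0; exists (Num.Def.trunc e^-1) => k Nk.
have h1 := truncnS_gt e^-1.
have h2 : (Num.Def.trunc e^-1).+1%:R <= k.+1%:R :> R by rewrite ler_nat ltnS.
rewrite invf_plt ?posrE //; lra.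
Qed.

Lemma near_oo (P : nat -> Prop) : (\forall n \near \oo, P n) ->
  exists N, forall n, (N <= n)%N -> P n.
Proof. by rewrite /prop_near1 /nbhs /= => -[N _ HN]; exists N. Qed.

Section Riesz.
Variables (R : realType) (H : completeNormedModType R) (ip : H -> H -> R).
Hypothesis hip : is_inner_product ip.

Lemma riesz (f : H -> R) (M : R) :
  (forall a y z, f (a *: y + z) = a * f y + f z) ->
  (forall y, `|f y| <= M * `|y|) -> exists l, forall y, f y = ip l y.
Proof.
move=> flin fb.
have f0 : f 0 = 0 by have := flin 1 0 0; rewrite scaler0 addr0 mul1r; lra.
have fZ a y : f (a *: y) = a * f y by have := flin a y 0; rewrite addr0 f0 addr0.
have fD y z : f (y + z) = f y + f z by have := flin 1 y z; rewrite scale1r mul1r.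
have fB y z : f (y - z) = f y - f z.
  by rewrite fD -scaleN1r fZ; ring.
case: (pselect (forall y, f y = 0)) => [allz|].
  by exists 0 => y; rewrite allz (ip0l hip).
move=> /existsNP [e fe].
have M0 : 0 < M.
  have : 0 < `|f e| by rewrite normr_gt0; apply/eqP.
  have := fb e; have := normr_ge0 e; nra.
set e1 := (f e)^-1 *: e.
have fe1 : f e1 = 1 by rewrite fZ mulVf //; apply/eqP.
set S := [set `|y| | y in [set y | f y = 1]].
have S0 : S !=set0 by exists `|e1|, e1.
have Slb : has_lbound S by exists 0 => _ [y _ <-].
set d := inf S.
have dle y : f y = 1 -> d <= `|y|.
  by move=> fy; apply: ge_inf => //; exists y.
have d0 : 0 <= d by apply: lb_le_inf => // _ [y _ <-].
have ex k : exists y, f y = 1 /\ `|y| < d + k.+1%:R^-1.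
  have : inf S < d + k.+1%:R^-1 by rewrite ltrDl invr_gt0 ltr0n.
  by move=> /(inf_lt S0) [_ [y fy <-] lt]; exists y.
have [u hu] := choice ex.
have ule k : (0 < k.+1%:R^-1 :> R) && (k.+1%:R^-1 <= 1 :> R).
  by rewrite invr_gt0 ltr0n /= invf_le1 ?ler1n ?ltr0n.
have cu : cvgn u.
  apply: cauchy_seq => eps eps0.
  set qv := eps * eps / (8 * d + 4).
  have q : 0 < qv by rewrite divr_gt0 ?mulr_gt0 //; lra.
  have [N hN] := inv_small q.
  exists N => n Nn.
  have ha := hN N (leqnn N); have hb := hN n Nn.
  have /andP[a0 a1] := ule N; have /andP[b0 b1] := ule n.
  move: (hu N) (hu n) => [fN nN] [fn nn].
  have mid : d <= `|u N + u n| / 2.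
    have := dle ((1/2 : R) *: (u N + u n)).
    rewrite normrZ fZ fD fN fn ger0_norm; last by lra.
    move=> h; have : (1/2:R) * (1+1) = 1 by field.
    move/h; lra.
  have par : `|u N - u n| ^+ 2 = 2 * `|u N| ^+ 2 + 2 * `|u n| ^+ 2 - `|u N + u n| ^+ 2.
    rewrite (normB2 hip) (normD2 hip); ring.
  have qe : qv * (8 * d + 4) = eps * eps by rewrite /qv divfK //; apply/lt0r_neq0; lra.
  have nN0 := normr_ge0 (u N); have nn0 := normr_ge0 (u n).
  have s1 : `|u N - u n| ^+ 2 < eps ^+ 2.
    rewrite par.
    set a := N.+1%:R^-1 in ha a0 a1 nN *; set b := n.+1%:R^-1 in hb b0 b1 nn *.
    have h1 : `|u N| ^+ 2 < (d + a) ^+ 2 by rewrite ltr_pXn2r // ?nnegrE //; lra.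
    have h2 : `|u n| ^+ 2 < (d + b) ^+ 2 by rewrite ltr_pXn2r // ?nnegrE //; lra.
    have h3 : (2 * d) ^+ 2 <= `|u N + u n| ^+ 2 by rewrite ler_pXn2r // ?nnegrE //; lra.
    have h4 : 2 * (d + a) ^+ 2 + 2 * (d + b) ^+ 2 - (2 * d) ^+ 2 <= (4 * d + 2) * (a + b) by nra.
    have h5 : (4 * d + 2) * (a + b) < (8 * d + 4) * qv by nra.
    nra.
  have := normr_ge0 (u N - u n); nra.
set m := lim (u @ \oo).
have um : u @ \oo --> m := cu.
have fm : f m = 1.
  apply/eqP; rewrite -subr_eq0; apply/eqP; apply: eps0 => eps eps0.
  have [N hN] := near_oo (cvgr_dist_lt _ _ um _ (divr_gt0 eps0 M0)).
  have := hN N (leqnn N).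
  rewrite -(hu N).1 -fB => h.
  have e' : M * (eps / M) = eps by rewrite mulrC divfK // gt_eqF.
  have := fb (m - u N); have := normr_ge0 (m - u N); nra.
have mmin y : f y = 1 -> `|m| <= `|y|.
  move=> fy; apply: le_trans (dle _ fy).
  apply: le_eps => eps eps0.
  have e2 : 0 < eps / 2 by rewrite divr_gt0.
  have [N1 hN1] := near_oo (cvgr_dist_lt _ _ um _ e2).
  have [N2 hN2] := inv_small e2.
  set k := maxn N1 N2.
  have h1 : `|m - u k| < eps / 2 by exact: hN1 k (leq_maxl _ _).
  have h2 : k.+1%:R^-1 < eps / 2 :> R by exact: hN2 k (leq_maxr _ _).
  have h3 : `|u k| < d + k.+1%:R^-1 by exact: (hu k).2.
  have h4 : `|m| <= `|m - u k| + `|u k|.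
    have {1}-> : m = (m - u k) + u k by rewrite subrK.
    exact: ler_normD.
  move: h1 h2 h3 h4; clearbody k; generalize (k.+1%:R^-1 : R) => a; generalize `|m| `|m - u k| `|u k| => A B C. lra.
have orth z : f z = 0 -> ip m z = 0.
  move=> fz0; set B := ip m z; set D := `|z| ^+ 2.
  have D0 : 0 <= D by rewrite exprn_ge0.
  have key s : 0 <= 2 * s * B + s ^+ 2 * D.
    have : `|m| <= `|m + s *: z| by apply: mmin; rewrite fD fZ fz0 mulr0 addr0.
    rewrite -(ler_pXn2r (n := 2)) // ?nnegrE // (normD2 hip) (ipZr hip) normrZ exprMn.
    rewrite real_normK ?num_real // -/B -/D; lra.
  set s := - B / (D + 1).
  have es : s * (D + 1) = - B by rewrite /s divfK //; apply/lt0r_neq0; lra.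
  have := key s => hk.
  have hB : B ^+ 2 <= 0.
    have : 0 <= (2 * s * B + s ^+ 2 * D) * (D + 1) ^+ 2 by rewrite mulr_ge0 // exprn_ge0 //; lra.
    have -> : (2 * s * B + s ^+ 2 * D) * (D + 1) ^+ 2 = 2 * (s * (D + 1)) * B * (D + 1) + (s * (D + 1)) ^+ 2 * D by ring.
    rewrite es; nra.
  apply/eqP; rewrite -(sqrf_eq0); apply/eqP; apply: le_anti; rewrite hB sqr_ge0 //.
have m0 : m != 0 by apply/eqP => m0; move: fm; rewrite m0 f0; lra.
have nm0 : `|m| ^+ 2 != 0 by rewrite sqrf_eq0 normr_eq0.
exists ((`|m| ^+ 2)^-1 *: m) => y; rewrite (ipZl hip).
have := orth (y - f y *: m); rewrite fB fZ fm mulr1 subrr => /(_ erefl).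
rewrite (ipBr hip) (ipZr hip) (ipn hip) => h.
have -> : ip m y = f y * `|m| ^+ 2 by lra.
by rewrite mulrCA mulVf // mulr1.
Qed.
End Riesz.

Unset Implicit Arguments.

Theorem mainTheorem7 (R : realType) (H : completeNormedModType R)
  (ip : H -> H -> R) (Omega : Type) (C : Omega -> set H) :
  is_inner_product ip ->
  (exists a b : Omega, a <> b) ->
  (forall a, closed (C a) /\ convex_subset (C a)) ->
  (\bigcap_a C a) !=set0 ->
  dense (affine_hull (\bigcap_a C a)) ->
  forall (x0 : H) (t : nat -> R) (x : nat -> H),
    remote_projections C t x0 x -> weakly_converges ip x.
Proof.
move=> hip _ hC [c0 hc0] hdense x0 t x [_ _ hx0 [alpha hal]].
have fej c : (\bigcap_a C a) c -> forall n, `|x n.+1 - c| <= `|x n - c|.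
  move=> hc n; apply: (proj_fejer hip (hC (alpha n)).2 (hal n).2).
  exact: hc.
have normcv c : (\bigcap_a C a) c -> cvgn (fun n => `|x n - c|).
  move=> hc; apply: nonincreasing_is_cvgn.
    by apply/nonincreasing_seqP => n; exact: fej.
  by exists 0 => _ [n _ <-].
set Mx := `|x 0%N - c0| + `|c0| + 1.
have Mx0 : 0 < Mx by rewrite /Mx; have := normr_ge0 (x 0%N - c0); have := normr_ge0 c0; lra.
have xb n : `|x n| <= Mx.
  have h1 : `|x n - c0| <= `|x 0%N - c0|.
    elim: n => // n ih; exact: le_trans (fej _ hc0 n) ih.
  have h2 : `|x n| <= `|x n - c0| + `|c0|.
    have {1}-> : x n = (x n - c0) + c0 by rewrite subrK.
    exact: ler_normD.
  rewrite /Mx; lra.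
pose D y := cvgn (fun n => ip (x n) y).
have Dlin a y z : D y -> D z -> D (a *: y + z).
  move=> hy hz; rewrite /D.
  have -> : (fun n => ip (x n) (a *: y + z)) = (fun n => a * ip (x n) y + ip (x n) z).
    by apply: funext => n; rewrite (ipDr hip) (ipZr hip).
  apply: is_cvgD => //; apply: is_cvgM => //; exact: is_cvg_cst.
have D0 : D 0.
  rewrite /D; have -> : (fun n => ip (x n) 0) = (fun n => 0).
    by apply: funext => n; rewrite (ip0r hip).
  exact: is_cvg_cst.
have Dsub c c' : (\bigcap_a C a) c -> (\bigcap_a C a) c' -> D (c - c').
  move=> hc hc'; rewrite /D.
  have -> : (fun n => ip (x n) (c - c')) = (fun n => (`|x n - c'| * `|x n - c'| - `|x n - c| * `|x n - c| - `|c'| ^+ 2 + `|c| ^+ 2) / 2).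
    apply: funext => n; rewrite -!expr2 !(normB2 hip) (ipBr hip); by field.
  have ha := normcv _ hc'; have hb := normcv _ hc.
  move: ha hb; set ua := (fun n => `|x n - c'|); set ub := (fun n => `|x n - c|) => ha hb.
  apply: (is_cvgM (f := fun n => ua n * ua n - ub n * ub n - `|c'| ^+ 2 + `|c| ^+ 2) (g := fun _ => 2^-1)); last exact: is_cvg_cst.
  apply: is_cvgD; last exact: is_cvg_cst.
  apply: is_cvgB; last exact: is_cvg_cst.
  apply: is_cvgB; exact: is_cvgM.
have Daff : forall z, affine_hull (\bigcap_a C a) z -> D (z - c0).
  move=> z0 [n [p [w [hp hw ->]]]].
  have -> : \sum_(i < n) w i *: p i - c0 = \sum_(i < n) w i *: (p i - c0).
    symmetry; under eq_bigr do rewrite scalerBr.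
    by rewrite sumrB -scaler_suml hw scale1r.
  apply: (big_ind D) => //.
    by move=> a1 b1 ha hb; have := Dlin 1 a1 b1 ha hb; rewrite scale1r.
  by move=> i _; have := Dlin (w i) _ 0 (Dsub _ _ (hp i) hc0) D0; rewrite addr0.
have Dall y : D y.
  apply: cauchy_seqR => eps eps0.
  set r := eps / (4 * Mx).
  have r0 : 0 < r by rewrite divr_gt0 // mulr_gt0.
  have [z [bz az]] := hdense (ball (y + c0) r) (ex_intro _ (y + c0) (ballxx _ r0)) (ball_open _ _).
  set y' := z - c0.
  have hy' : D y' := Daff z az.
  have dyy : `|y - y'| < r.
    move: bz; rewrite -ball_normE /= /y'.
    by rewrite opprB addrA (addrAC y).
  have e4 : 0 < eps / 4 by rewrite divr_gt0.
  have [N hN] := near_oo (cvgr_dist_lt _ _ hy' _ e4).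
  exists N => n Nn.
  have pb k : `|ip (x k) (y - y')| <= eps / 4.
    apply: le_trans (CS hip _ _) _.
    have : `|x k| * `|y - y'| <= Mx * r.
      by apply: ler_pM => //; apply: ltW.
    have -> : Mx * r = eps / 4 by rewrite /r; field; apply/lt0r_neq0.
    done.
  have q1 := hN N (leqnn N); have q2 := hN n Nn.
  have q3 := pb N; have q4 := pb n.
  move: q1 q2 q3 q4; rewrite !(ipBr hip).
  set L := lim _.
  rewrite !ler_norml !ltr_norml => /andP[q1 q1'] /andP[q2 q2'] /andP[q3 q3'] /andP[q4 q4'].
  lra.
pose f y := lim ((fun n => ip (x n) y) @ \oo).
have fcv y : (fun n => ip (x n) y) @ \oo --> f y := Dall y.
have flin a y z : f (a *: y + z) = a * f y + f z.
  rewrite {1}/f.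
  have -> : (fun n => ip (x n) (a *: y + z)) = (fun n => a * ip (x n) y + ip (x n) z).
    by apply: funext => n; rewrite (ipDr hip) (ipZr hip).
  apply: cvg_lim; first exact: Rhausdorff.
  apply: cvgD; last exact: fcv.
  apply: cvgM; [exact: cvg_cst | exact: fcv].
have fb y : `|f y| <= Mx * `|y|.
  have hb n : `|ip (x n) y| <= Mx * `|y|.
    apply: le_trans (CS hip _ _) _.
    by apply: ler_wpM2r => //.
  rewrite ler_norml; apply/andP; split.
    apply: limr_ge; first exact: Dall.
    by exists 0%N => // n _; have := hb n; rewrite ler_norml => /andP[].
  apply: limr_le; first exact: Dall.
  by exists 0%N => // n _; have := hb n; rewrite ler_norml => /andP[].
have [l hl] := riesz hip flin fb.
by exists l => y; rewrite -hl; exact: fcv.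
Qed.
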